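(* Let $M$ be a non-reduced $n\times n$ matrix with natural number entries. Then there is a reduced submatrix $N$ of $M$ such that $\mathrm{Cat}(M)\neq\emptyset$ if and only if $\mathrm{Cat}(N)\neq\emptyset$.
   Context: For an $n\times n$ matrix $M=(m_{ij})$ with entries in the natural numbers, $\mathrm{Cat}(M)$ denotes the collection of categories $A$ with exactly $n$ distinct objects $x_1,\dots,x_n$ such that $|A(x_i,x_j)|=m_{ij}$ for all $i,j$, where $A(x_i,x_j)$ is the set of morphisms from $x_i$ to $x_j$. A matrix $M$ is called non-reduced if there exist $i\neq j$ such that $M_{ki}=M_{kj}$ and $M_{ik}=M_{jk}$ for all $k$ (i.e. row $i$ equals row $j$ and column $i$ equals column $j$); it is called reduced otherwise. A submatrix of $M$ means the matrix obtained by keeping the same subset of indices for rows and for columns, i.e. $(M_{st})_{s,t\in S}$ for some subset $S\subseteq\{1,\dots,n\}$. *)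

(* Defs.v *)
From mathcomp Require Import all_boot matrix.
Set Implicit Arguments. Unset Strict Implicit. Unset Printing Implicit Defensive.

(* A category with objects x_1..x_n (indexed by 'I_n, hence distinct) whose
   hom-set A(x_i,x_j) has exactly M i j elements.  Up to isomorphism we may take
   A(x_i,x_j) to be the canonical finite set 'I_(M i j). *)
Definition is_cat (n : nat) (M : 'M[nat]_n)
  (comp : forall i j k : 'I_n, 'I_(M i j) -> 'I_(M j k) -> 'I_(M i k))
  (idm : forall i : 'I_n, 'I_(M i i)) : Prop :=
  [/\ (forall (i j k l : 'I_n) (f : 'I_(M i j)) (g : 'I_(M j k)) (h : 'I_(M k l)),
          comp i k l (comp i j k f g) h = comp i j l f (comp j k l g h)),
      (forall (i j : 'I_n) (f : 'I_(M i j)), comp i i j (idm i) f = f) &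
      (forall (i j : 'I_n) (f : 'I_(M i j)), comp i j j f (idm j) = f)].

Definition Cat_nonempty (n : nat) (M : 'M[nat]_n) : Prop :=
  exists comp idm, @is_cat n M comp idm.

Definition non_reduced (n : nat) (M : 'M[nat]_n) : Prop :=
  exists i j : 'I_n, i != j /\ (forall k : 'I_n, M k i = M k j /\ M i k = M j k).

Definition reduced (n : nat) (M : 'M[nat]_n) : Prop := ~ non_reduced M.

Definition principal_submx (n : nat) (M : 'M[nat]_n) (S : {set 'I_n}) : 'M[nat]_#|S| :=
  \matrix_(a < #|S|, b < #|S|) M (enum_val a) (enum_val b).

(* Main.v *)
Require Import Defs.
From mathcomp Require Import all_boot matrix.
Set Implicit Arguments. Unset Strict Implicit. Unset Printing Implicit Defensive.

Lemma castcast (p q : nat) (e1 : q = p) (e2 : p = q) (w : 'I_p) :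
  cast_ord e1 (cast_ord e2 w) = w.
Proof. by apply: val_inj. Qed.

Lemma transfer (n m : nat) (M : 'M[nat]_n) (N : 'M[nat]_m) (f : 'I_m -> 'I_n)
  (hf : forall a b, N a b = M (f a) (f b)) :
  Cat_nonempty M -> Cat_nonempty N.
Proof.
move=> [comp [idm [Ha Hl Hr]]].
exists (fun a b c x y => cast_ord (esym (hf a c))
          (comp (f a) (f b) (f c) (cast_ord (hf a b) x) (cast_ord (hf b c) y))).
exists (fun a => cast_ord (esym (hf a a)) (idm (f a))).
split.
- move=> i j k l x y z; rewrite !castcast Ha; by [].
- move=> i j x; by rewrite castcast Hl castcast.
- move=> i j x; by rewrite castcast Hr castcast.
Qed.

Definition eqv (n : nat) (M : 'M[nat]_n) (k l : 'I_n) : bool :=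
  [forall t, (M t k == M t l) && (M k t == M l t)].

Lemma eqv_refl n (M : 'M[nat]_n) k : eqv M k k.
Proof. by apply/forallP => t; rewrite !eqxx. Qed.

Lemma eqv_sym n (M : 'M[nat]_n) k l : eqv M k l -> eqv M l k.
Proof.
move/forallP => H; apply/forallP => t; have /andP[/eqP -> /eqP ->] := H t.
by rewrite !eqxx.
Qed.

Lemma eqv_trans n (M : 'M[nat]_n) k l p : eqv M k l -> eqv M l p -> eqv M k p.
Proof.
move/forallP => H1 /forallP H2; apply/forallP => t.
have /andP[/eqP -> /eqP ->] := H1 t.
exact: H2.
Qed.

Lemma eqv_row n (M : 'M[nat]_n) k l t : eqv M k l -> M k t = M l t.
Proof. by move/forallP/(_ t)/andP => [_ /eqP]. Qed.

Lemma eqv_col n (M : 'M[nat]_n) k l t : eqv M k l -> M t k = M t l.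
Proof. by move/forallP/(_ t)/andP => [/eqP]. Qed.

Definition rep n (M : 'M[nat]_n) (k : 'I_n) : 'I_n :=
  [arg min_(l < k | eqv M k l) (l : nat)].

Lemma repP n (M : 'M[nat]_n) k :
  eqv M k (rep M k) /\ forall l, eqv M k l -> rep M k <= l.
Proof.
rewrite /rep; case: arg_minnP; first exact: eqv_refl.
move=> i Hi Hm; split => //.
Qed.

Lemma rep_eq n (M : 'M[nat]_n) k l : eqv M k l -> rep M k = rep M l.
Proof.
move=> Hkl; have [Hk mk] := repP M k; have [Hl ml] := repP M l.
apply: val_inj; apply/eqP; rewrite eqn_leq; apply/andP; split.
- apply: mk; exact: eqv_trans Hkl Hl.
- apply: ml; apply: eqv_trans Hk; exact: eqv_sym.
Qed.

Lemma rep_idem n (M : 'M[nat]_n) k : rep M (rep M k) = rep M k.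
Proof. by rewrite -(rep_eq (proj1 (repP M k))). Qed.

Theorem mainTheorem7 (n : nat) (M : 'M[nat]_n) :
  non_reduced M ->
  exists S : {set 'I_n}, reduced (principal_submx M S) /\ (Cat_nonempty M <-> Cat_nonempty (principal_submx M S)).
Proof.
move=> _.
pose S := [set k | rep M k == k].
have rS : forall k, rep M k \in S by move=> k; rewrite inE rep_idem.
have Mr : forall k l, M k l = M (rep M k) (rep M l).
  move=> k l; have [Hk _] := repP M k; have [Hl _] := repP M l.
  by rewrite (eqv_row l Hk) (eqv_col _ Hl).
pose r' := fun k => enum_rank_in (rS k) (rep M k).
have Er : forall k, enum_val (r' k) = rep M k by move=> k; rewrite enum_rankK_in.
exists S; split.
- move=> [a [b [neq Hab]]].
  have Hx : forall a : 'I_#|S|, enum_val a \in S by move=> c; exact: enum_valP.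
  have rx : forall c : 'I_#|S|, rep M (enum_val c) = enum_val c.
    by move=> c; have := Hx c; rewrite inE => /eqP.
  have E : eqv M (enum_val a) (enum_val b).
    apply/forallP => t; have [C R] := Hab (r' t).
    rewrite !mxE Er in C R.
    by rewrite (Mr t (enum_val a)) (Mr t (enum_val b)) (Mr (enum_val a) t) (Mr (enum_val b) t) !rx C R !eqxx.
  have := rep_eq E; rewrite !rx => /enum_val_inj Eab.
  by rewrite Eab eqxx in neq.
- split.
  + apply: (transfer (f := enum_val)) => a b; by rewrite mxE.
  + apply: (transfer (f := r')) => a b; by rewrite mxE !Er -Mr.
Qed.
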